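(* Let $p(z)=z^n+a_nz^{n-1}+\cdots+a_2z+a_1$ be a complex monic polynomial with $n\geq2$ and $a_1\neq0$, with Frobenius companion matrix $C_p$. Then $$\|C_p^4\|\leq\sqrt{\frac{1}{2}\left(\delta_1+\delta+\sqrt{(\delta_1-\delta)^2+4\delta_2}\right)+1}.$$
   Context: The Frobenius companion matrix of $p$ is the $n\times n$ matrix $C_p$ whose first row is $(-a_n,-a_{n-1},\dots,-a_2,-a_1)$, whose entries $(k+1,k)$ equal $1$ for $k=1,\dots,n-1$, and whose other entries are $0$. Define numbers $b_j,c_j,d_j$ ($j=1,\dots,n$) by: the first row of $C_p^2$ is $(b_n,b_{n-1},\dots,b_1)$, the first row of $C_p^3$ is $(c_n,\dots,c_1)$, the first row of $C_p^4$ is $(d_n,\dots,d_1)$ (so $b_j=a_na_j-a_{j-1}$, $c_j=-a_nb_j+a_{n-1}a_j-a_{j-2}$ with $a_0=a_{-1}=0$). Set $\alpha=\sum_{j=1}^n|a_j|^2$, $\beta=\sum_{j=1}^n|b_j|^2$, $\gamma=-\sum_{j=1}^n b_j\overline{a_j}$, $\delta=\frac{1}{2}\left(\alpha+\beta+\sqrt{(\alpha-\beta)^2+4|\gamma|^2}\right)$; $\alpha_1=\sum_{j=1}^n|d_j|^2$, $\beta_1=\sum_{j=1}^n|c_j|^2$, $\gamma_1=\sum_{j=1}^n d_j\overline{c_j}$, $\delta_1=\frac12\left(\alpha_1+\beta_1+\sqrt{(\alpha_1-\beta_1)^2+4|\gamma_1|^2}\right)$; $\gamma_2=\sum_{j=1}^n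 d_j\overline{b_j}$, $\gamma_3=\sum_{j=1}^n d_j\overline{a_j}$, $\gamma_4=\sum_{j=1}^n c_j\overline{b_j}$, $\gamma_5=\sum_{j=1}^n c_j\overline{a_j}$, and $\delta_2=\frac12\Big(|\gamma_2|^2+|\gamma_3|^2+|\gamma_4|^2+|\gamma_5|^2+\sqrt{\big((|\gamma_2|^2+|\gamma_3|^2)-(|\gamma_4|^2+|\gamma_5|^2)\big)^2+4|\gamma_2\overline{\gamma_4}+\gamma_3\overline{\gamma_5}|^2}\Big)$. $\|\cdot\|$ is the spectral (operator) norm. *)

(* Defs.v *)
From HB Require Import structures.
From mathcomp Require Import all_boot all_order all_algebra.
From mathcomp Require Import complex.
From mathcomp Require Import boolp classical_sets reals.

Set Implicit Arguments.
Unset Strict Implicit.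
Unset Printing Implicit Defensive.

Import Order.TTheory GRing.Theory Num.Theory.
Local Open Scope ring_scope.
Local Open Scope classical_set_scope.

Section Defs.
Variable R : realType.
Local Notation C := R[i].

Definition sqmod (z : C) : R := complex.Re z ^+ 2 + complex.Im z ^+ 2.

Definition cconj (z : C) : C := conjc z.

Definition vnorm n (v : 'cV[C]_n) : R := Num.sqrt (\sum_(i < n) sqmod (v i 0)).

Definition opnorm n (A : 'M[C]_n) : R :=
  sup [set r : R | exists v : 'cV[C]_n, vnorm v = 1 /\ r = vnorm (A *m v)].

(* Frobenius companion matrix of z^n + a_n z^(n-1) + ... + a_2 z + a_1,
   coefficients given by a : nat -> C (only a 1, ..., a n are used).
   0-based: first row entry j is -a_(n-j); entries (j+1, j) equal 1. *)
Definition companion (n : nat) (a : nat -> C) : 'M[C]_n :=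
  \matrix_(i < n, j < n)
    if (i == 0 :> nat) then - a (n - j)%N
    else if (i == j.+1 :> nat) then 1 else 0.

Definition mxe n (A : 'M[C]_n) (i j : nat) : C :=
  if @insub nat (fun k => k < n)%N _ i is Some i' then
    if @insub nat (fun k => k < n)%N _ j is Some j' then A i' j' else 0
  else 0.

Section Quantities.
Variables (n : nat) (a : nat -> C).
Let Cp := companion n a.
(* first row of C_p^k is (x_n, ..., x_1): x_j = (C_p^k)_{1, n-j+1} (1-based) *)
Definition bco (j : nat) : C := mxe (Cp ^+ 2) 0 (n - j).
Definition cco (j : nat) : C := mxe (Cp ^+ 3) 0 (n - j).
Definition dco (j : nat) : C := mxe (Cp ^+ 4) 0 (n - j).

Definition alpha : R := \sum_(1 <= j < n.+1) sqmod (a j).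
Definition beta : R := \sum_(1 <= j < n.+1) sqmod (bco j).
Definition gamma : C := - \sum_(1 <= j < n.+1) bco j * cconj (a j).
Definition delta : R :=
  (alpha + beta + Num.sqrt ((alpha - beta) ^+ 2 + 4 * sqmod gamma)) / 2.

Definition alpha1 : R := \sum_(1 <= j < n.+1) sqmod (dco j).
Definition beta1 : R := \sum_(1 <= j < n.+1) sqmod (cco j).
Definition gamma1 : C := \sum_(1 <= j < n.+1) dco j * cconj (cco j).
Definition delta1 : R :=
  (alpha1 + beta1 + Num.sqrt ((alpha1 - beta1) ^+ 2 + 4 * sqmod gamma1)) / 2.

Definition gamma2 : C := \sum_(1 <= j < n.+1) dco j * cconj (bco j).
Definition gamma3 : C := \sum_(1 <= j < n.+1) dco j * cconj (a j).
Definition gamma4 : C := \sum_(1 <= j < n.+1) cco j * cconj (bco j).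
Definition gamma5 : C := \sum_(1 <= j < n.+1) cco j * cconj (a j).
Definition delta2 : R :=
  (sqmod gamma2 + sqmod gamma3 + sqmod gamma4 + sqmod gamma5 +
   Num.sqrt (((sqmod gamma2 + sqmod gamma3) - (sqmod gamma4 + sqmod gamma5)) ^+ 2
             + 4 * sqmod (gamma2 * cconj gamma4 + gamma3 * cconj gamma5))) / 2.
End Quantities.
End Defs.

(* Main.v *)
Require Import Defs.
From HB Require Import structures.
From mathcomp Require Import all_boot all_order all_algebra.
From mathcomp Require Import complex.
From mathcomp Require Import boolp classical_sets reals.
From mathcomp Require Import ring lra zify.
Import Order.TTheory GRing.Theory Num.Theory.
Local Open Scope ring_scope.

Section Aux.
Variable R : realType.
Local Notation C := R[i].
Local Notation re := (@complex.Re R).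
Local Notation im := (@complex.Im R).

Lemma reD (x y : C) : re (x + y) = re x + re y. Proof. by case: x; case: y. Qed.
Lemma imD (x y : C) : im (x + y) = im x + im y. Proof. by case: x; case: y. Qed.
Lemma reN (x : C) : re (- x) = - re x. Proof. by case: x. Qed.
Lemma imN (x : C) : im (- x) = - im x. Proof. by case: x. Qed.
Lemma reM (x y : C) : re (x * y) = re x * re y - im x * im y. Proof. by case: x; case: y. Qed.
Lemma imM (x y : C) : im (x * y) = re x * im y + im x * re y. Proof. by case: x => a b; case: y => c d /=; ring. Qed.
Lemma reJ (x : C) : re (conjc x) = re x. Proof. by case: x. Qed.
Lemma imJ (x : C) : im (conjc x) = - im x. Proof. by case: x. Qed.
Lemma re0 : re 0 = 0. Proof. by []. Qed.
Lemma im0 : im 0 = 0. Proof. by []. Qed.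

Lemma cext (x y : C) : re x = re y -> im x = im y -> x = y.
Proof. by case: x => a b; case: y => c d /= -> ->. Qed.

Lemma re_sum (I : Type) (r : seq I) (P : pred I) (F : I -> C) :
  re (\sum_(i <- r | P i) F i) = \sum_(i <- r | P i) re (F i).
Proof. exact: (big_morph _ reD re0). Qed.

Lemma sqmodE (z : C) : sqmod z = re z ^+ 2 + im z ^+ 2. Proof. by []. Qed.
Lemma sqmod_ge0 (z : C) : 0 <= sqmod z.
Proof. by rewrite sqmodE addr_ge0 // sqr_ge0. Qed.

Lemma le_sqrt_sq (u X : R) : u ^+ 2 <= X -> u <= Num.sqrt X.
Proof.
move=> h; have [u0|u0] := lerP u 0; first exact: le_trans u0 (sqrtr_ge0 _).
have X0 : 0 <= X by apply: le_trans h; exact: sqr_ge0.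
rewrite -(ger0_norm (ltW u0)) -sqrtr_sqr ler_sqrt //.
Qed.

Lemma core (A B G s P Q u w : R) : 0 <= G -> 0 <= s -> s ^+ 2 = (A - B) ^+ 2 + 4 * G ->
  0 <= P -> 0 <= Q -> u <= w -> 0 <= w -> w ^+ 2 <= P * Q * G ->
  A * P + B * Q + 2 * u <= (A + B + s) / 2 * (P + Q).
Proof.
move=> G0 s0 hs P0 Q0 uw w0 wG.
set a := (B - A + s) / 2; set b := (A - B + s) / 2.
have ha : 0 <= a.
  rewrite /a; apply: divr_ge0 => //.
  have : (A - B) ^+ 2 <= s ^+ 2 by rewrite hs; nra.
  nra.
have hb : 0 <= b.
  rewrite /b; apply: divr_ge0 => //.
  have : (A - B) ^+ 2 <= s ^+ 2 by rewrite hs; nra.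
  nra.
have hab : a * b = G.
  have e4 : 4 * (a * b) = s ^+ 2 - (A - B) ^+ 2 by rewrite /a /b; field.
  rewrite hs in e4; lra.
have e : (A + B + s) / 2 * (P + Q) - (A * P + B * Q) = a * P + b * Q by rewrite /a /b; field.
have h1 : 0 <= a * P + b * Q by nra.
have h2 : (2 * w) ^+ 2 <= (a * P + b * Q) ^+ 2.
  have : (a * P + b * Q) ^+ 2 = (a * P - b * Q) ^+ 2 + 4 * (a * b) * P * Q by ring.
  rewrite hab => ->; have := sqr_ge0 (a * P - b * Q); nra.
have h3 : 2 * w <= a * P + b * Q by nra.
rewrite -subr_ge0; have -> : (A + B + s) / 2 * (P + Q) - (A * P + B * Q + 2 * u)
   = a * P + b * Q - 2 * u by rewrite -e; ring.
lra.
Qed.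


Definition lam2 (A B G : R) := (A + B + Num.sqrt ((A - B) ^+ 2 + 4 * G)) / 2.

Lemma lam2C A B G : lam2 A B G = lam2 B A G.
Proof. by rewrite /lam2 (addrC A B); congr ((_ + Num.sqrt (_ + _)) / 2); ring. Qed.

Lemma lam2_ge0 A B G : 0 <= A -> 0 <= B -> 0 <= G -> 0 <= lam2 A B G.
Proof.
move=> hA hB hG; rewrite /lam2 divr_ge0 // addr_ge0 ?addr_ge0 ?sqrtr_ge0 //.
Qed.

Lemma im_sum (I : Type) (r : seq I) (P : pred I) (F : I -> C) :
  im (\sum_(i <- r | P i) F i) = \sum_(i <- r | P i) im (F i).
Proof. exact: (big_morph _ imD im0). Qed.

Lemma block (A B : R) (g x y : C) :
  A * sqmod x + B * sqmod y + 2 * re (conjc x * y * g)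
  <= lam2 A B (sqmod g) * (sqmod x + sqmod y).
Proof.
rewrite /lam2; apply: (@core A B (sqmod g) _ (sqmod x) (sqmod y) (re (conjc x * y * g)) (Num.sqrt (sqmod (conjc x * y * g)))).
- exact: sqmod_ge0.
- exact: sqrtr_ge0.
- rewrite sqr_sqrtr // addr_ge0 ?sqr_ge0 // mulr_ge0 ?sqmod_ge0 //.
- exact: sqmod_ge0.
- exact: sqmod_ge0.
- apply: le_sqrt_sq; rewrite sqmodE; have := sqr_ge0 (im (conjc x * y * g)); lra.
- exact: sqrtr_ge0.
- rewrite sqr_sqrtr ?sqmod_ge0 //.
  have -> : sqmod (conjc x * y * g) = sqmod x * sqmod y * sqmod g.
    by rewrite !sqmodE !(reM, imM, reJ, imJ); ring.
  exact: le_refl.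
Qed.

Lemma cs4 (a1 a2 a3 a4 c1 c2 c3 c4 : R) :
  a1 * c1 + a2 * c2 + a3 * c3 + a4 * c4 <=
  Num.sqrt ((a1 ^+ 2 + a2 ^+ 2) + (a3 ^+ 2 + a4 ^+ 2)) *
  Num.sqrt ((c1 ^+ 2 + c2 ^+ 2) + (c3 ^+ 2 + c4 ^+ 2)).
Proof.
rewrite -sqrtrM ?addr_ge0 ?sqr_ge0 //; apply: le_sqrt_sq.
have e : ((a1 ^+ 2 + a2 ^+ 2) + (a3 ^+ 2 + a4 ^+ 2)) * ((c1 ^+ 2 + c2 ^+ 2) + (c3 ^+ 2 + c4 ^+ 2))
  - (a1 * c1 + a2 * c2 + a3 * c3 + a4 * c4) ^+ 2 =
  (a1 * c2 - a2 * c1) ^+ 2 + (a1 * c3 - a3 * c1) ^+ 2 + (a1 * c4 - a4 * c1) ^+ 2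
  + (a2 * c3 - a3 * c2) ^+ 2 + (a2 * c4 - a4 * c2) ^+ 2 + (a3 * c4 - a4 * c3) ^+ 2 by ring.
rewrite -subr_ge0 e; rewrite !addr_ge0 ?sqr_ge0 //.
Qed.

Definition ip n (f g : nat -> C) : C := \sum_(j < n) f j * conjc (g j).
Definition nrm n (f : nat -> C) : R := \sum_(j < n) sqmod (f j).

Lemma ipC n f g : ip n g f = conjc (ip n f g).
Proof.
apply: cext; rewrite ?reJ ?imJ /ip ?re_sum ?im_sum -?sumrN; apply: eq_bigr => j _;
  rewrite !(reM, imM, reJ, imJ); ring.
Qed.

Lemma re_ipE n f : re (ip n f f) = nrm n f.
Proof. rewrite /ip re_sum; apply: eq_bigr => j _; rewrite reM reJ imJ sqmodE; ring. Qed.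

Lemma im_ipE n f : im (ip n f f) = 0.
Proof. rewrite /ip im_sum big1 // => j _; rewrite imM reJ imJ; ring. Qed.

Lemma nrm_ge0 n f : 0 <= nrm n f.
Proof. by apply: sumr_ge0 => j _; exact: sqmod_ge0. Qed.

Lemma gram n (r1 r2 r3 r4 V : nat -> C) (x1 x2 x3 x4 : C) : nrm n V = 1 ->
  x1 = \sum_(j < n) r1 j * V j ->
  x2 = \sum_(j < n) r2 j * V j ->
  x3 = \sum_(j < n) r3 j * V j ->
  x4 = \sum_(j < n) r4 j * V j ->
  sqmod x1 + sqmod x2 + sqmod x3 + sqmod x4 <=
  lam2 (lam2 (nrm n r1) (nrm n r2) (sqmod (ip n r1 r2)))
       (lam2 (nrm n r4) (nrm n r3) (sqmod (ip n r3 r4)))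
       (lam2 (sqmod (ip n r1 r3) + sqmod (ip n r1 r4))
             (sqmod (ip n r2 r3) + sqmod (ip n r2 r4))
             (sqmod (ip n r1 r3 * conjc (ip n r2 r3) + ip n r1 r4 * conjc (ip n r2 r4)))).
Proof.
move=> hV hx1 hx2 hx3 hx4.
set w := fun j => conjc x1 * r1 j + conjc x2 * r2 j + conjc x3 * r3 j + conjc x4 * r4 j.
set S := sqmod x1 + sqmod x2 + sqmod x3 + sqmod x4.
have hSw : \sum_(j < n) V j * w j =
    conjc x1 * x1 + conjc x2 * x2 + conjc x3 * x3 + conjc x4 * x4.
  transitivity (\sum_(j < n) (conjc x1 * (r1 j * V j) + conjc x2 * (r2 j * V j)
     + conjc x3 * (r3 j * V j) + conjc x4 * (r4 j * V j))).
    by apply: eq_bigr => j _; rewrite /w; ring.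
  by rewrite !big_split -!mulr_sumr hx1 hx2 hx3 hx4.
have hS : S = re (\sum_(j < n) V j * w j).
  by rewrite hSw !reD !reM !reJ !imJ /S !sqmodE; ring.
set T := nrm n w.
have step2 : forall t, 2 * t * S <= t ^+ 2 + T.
  move=> t.
  have h : \sum_(j < n) 2 * t * re (V j * w j) <=
           \sum_(j < n) (t ^+ 2 * sqmod (V j) + sqmod (w j)).
    apply: ler_sum => j _; rewrite !sqmodE reM.
    have := sqr_ge0 (t * re (V j) - re (w j)); have := sqr_ge0 (t * im (V j) + im (w j)).
    nra.
  rewrite -mulr_sumr -re_sum -hS big_split /= -mulr_sumr -/(nrm n V) hV mulr1 in h; exact: h.
have hT : T = re (conjc x1 * x1 * ip n r1 r1 + conjc x1 * x2 * ip n r1 r2 + conjc x1 * x3 * ip n r1 r3 + conjc x1 * x4 * ip n r1 r4 + conjc x2 * x1 * ip n r2 r1 + conjc x2 * x2 * ip n r2 r2 + conjc x2 * x3 * ip n r2 r3 + conjc x2 * x4 * ip n r2 r4 + conjc x3 * x1 * ip n r3 r1 + conjc x3 * x2 * ip n r3 r2 + conjc x3 * x3 * ip n r3 r3 + conjc x3 * x4 * ip n r3 r4 + conjc x4 * x1 * ip n r4 r1 + conjc x4 * x2 * ip n r4 r2 + conjc x4 * x3 * ip n r4 r3 + conjc x4 * x4 * ip n r4 r4).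
  transitivity (re (\sum_(j < n) w j * conjc (w j))).
    rewrite /T /nrm re_sum; apply: eq_bigr => j _.
    by rewrite sqmodE reM reJ imJ; ring.
  congr (re _).
  transitivity (\sum_(j < n) (conjc x1 * x1 * (r1 j * conjc (r1 j)) + conjc x1 * x2 * (r1 j * conjc (r2 j)) + conjc x1 * x3 * (r1 j * conjc (r3 j)) + conjc x1 * x4 * (r1 j * conjc (r4 j)) + conjc x2 * x1 * (r2 j * conjc (r1 j)) + conjc x2 * x2 * (r2 j * conjc (r2 j)) + conjc x2 * x3 * (r2 j * conjc (r3 j)) + conjc x2 * x4 * (r2 j * conjc (r4 j)) + conjc x3 * x1 * (r3 j * conjc (r1 j)) + conjc x3 * x2 * (r3 j * conjc (r2 j)) + conjc x3 * x3 * (r3 j * conjc (r3 j)) + conjc x3 * x4 * (r3 j * conjc (r4 j)) + conjc x4 * x1 * (r4 j * conjc (r1 j)) + conjc x4 * x2 * (r4 j * conjc (r2 j)) + conjc x4 * x3 * (r4 j * conjc (r3 j)) + conjc x4 * x4 * (r4 j * conjc (r4 j)))).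
    apply: eq_bigr => j _; rewrite /w; apply: cext; rewrite !(reD, imD, reM, imM, reJ, imJ); ring.
  by rewrite !big_split -!mulr_sumr.
rewrite (ipC n r1 r2) (ipC n r1 r3) (ipC n r1 r4) (ipC n r2 r3) (ipC n r2 r4) (ipC n r3 r4) in hT.
set G12 := ip n r1 r2 in hT *; set G13 := ip n r1 r3 in hT *; set G14 := ip n r1 r4 in hT *.
set G23 := ip n r2 r3 in hT *; set G24 := ip n r2 r4 in hT *; set G34 := ip n r3 r4 in hT *.
have i11 := im_ipE n r1; have i22 := im_ipE n r2; have i33 := im_ipE n r3; have i44 := im_ipE n r4.
rewrite -(re_ipE n r1) -(re_ipE n r2) -(re_ipE n r3) -(re_ipE n r4).
set G11 := ip n r1 r1 in hT i11 *; set G22 := ip n r2 r2 in hT i22 *.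
set G33 := ip n r3 r3 in hT i33 *; set G44 := ip n r4 r4 in hT i44 *.
set Cross := re (conjc x1 * x3 * G13 + conjc x1 * x4 * G14 + conjc x2 * x3 * G23 + conjc x2 * x4 * G24).
have hT2 : T = (re G11 * sqmod x1 + re G22 * sqmod x2 + 2 * re (conjc x1 * x2 * G12))
             + (re G33 * sqmod x3 + re G44 * sqmod x4 + 2 * re (conjc x3 * x4 * G34)) + 2 * Cross.
  rewrite hT /Cross !sqmodE.
  rewrite !(reD, imD, reM, imM, reJ, imJ) i11 i22 i33 i44; ring.
have hG11 : 0 <= re G11 by rewrite /G11 re_ipE nrm_ge0.
have hG22 : 0 <= re G22 by rewrite /G22 re_ipE nrm_ge0.
have hG33 : 0 <= re G33 by rewrite /G33 re_ipE nrm_ge0.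
have hG44 : 0 <= re G44 by rewrite /G44 re_ipE nrm_ge0.
set d1 := lam2 (re G11) (re G22) (sqmod G12).
set d := lam2 (re G44) (re G33) (sqmod G34).
set d2 := lam2 (sqmod G13 + sqmod G14) (sqmod G23 + sqmod G24)
   (sqmod (G13 * conjc G23 + G14 * conjc G24)).
have hd1 : 0 <= d1 by apply: lam2_ge0; rewrite // sqmod_ge0.
have hd : 0 <= d by apply: lam2_ge0; rewrite // sqmod_ge0.
have hd2 : 0 <= d2 by apply: lam2_ge0; [apply: addr_ge0; apply: sqmod_ge0 | apply: addr_ge0; apply: sqmod_ge0 | apply: sqmod_ge0].
have hB1 : re G11 * sqmod x1 + re G22 * sqmod x2 + 2 * re (conjc x1 * x2 * G12)
   <= d1 * (sqmod x1 + sqmod x2) by exact: block.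
have hB2 : re G33 * sqmod x3 + re G44 * sqmod x4 + 2 * re (conjc x3 * x4 * G34)
   <= d * (sqmod x3 + sqmod x4) by rewrite /d lam2C; exact: block.
set z1 := x1 * conjc G13 + x2 * conjc G23.
set z2 := x1 * conjc G14 + x2 * conjc G24.
have hz : sqmod z1 + sqmod z2 = (sqmod G13 + sqmod G14) * sqmod x1
   + (sqmod G23 + sqmod G24) * sqmod x2
   + 2 * re (conjc x1 * x2 * (G13 * conjc G23 + G14 * conjc G24)).
  rewrite /z1 /z2 !sqmodE !(reD, imD, reM, imM, reJ, imJ); ring.
have hzb : sqmod z1 + sqmod z2 <= d2 * (sqmod x1 + sqmod x2) by rewrite hz; exact: block.
have hc : Cross <= Num.sqrt (sqmod z1 + sqmod z2) * Num.sqrt (sqmod x3 + sqmod x4).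
  have -> : Cross = re z1 * re x3 + im z1 * im x3 + re z2 * re x4 + im z2 * im x4.
    rewrite /Cross /z1 /z2 !(reD, imD, reM, imM, reJ, imJ); ring.
  rewrite !sqmodE; exact: cs4.
have hP : 0 <= sqmod x1 + sqmod x2 by apply: addr_ge0; apply: sqmod_ge0.
have hQ : 0 <= sqmod x3 + sqmod x4 by apply: addr_ge0; apply: sqmod_ge0.
have hcore : d1 * (sqmod x1 + sqmod x2) + d * (sqmod x3 + sqmod x4) + 2 * Cross
   <= lam2 d1 d d2 * ((sqmod x1 + sqmod x2) + (sqmod x3 + sqmod x4)).
  rewrite /lam2; apply: (@core d1 d d2 _ _ _ Cross
     (Num.sqrt (sqmod z1 + sqmod z2) * Num.sqrt (sqmod x3 + sqmod x4))) => //.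
  - exact: sqrtr_ge0.
  - by rewrite sqr_sqrtr // addr_ge0 ?sqr_ge0 // mulr_ge0.
  - by rewrite mulr_ge0 ?sqrtr_ge0.
  - have hz0 : 0 <= sqmod z1 + sqmod z2 by apply: addr_ge0; apply: sqmod_ge0.
    rewrite exprMn (sqr_sqrtr hQ) (sqr_sqrtr hz0).
    have := ler_wpM2r hQ hzb; nra.
have hlam : 0 <= lam2 d1 d d2 by apply: lam2_ge0.
have key : T <= lam2 d1 d d2 * S.
  rewrite hT2 /S; clear -hB1 hB2 hcore; lra.
have h2 := step2 S.
have hS0 : 0 <= S by rewrite /S; apply: addr_ge0; [apply: addr_ge0; [apply: addr_ge0|]|]; apply: sqmod_ge0.
nra.
Qed.
End Aux.
Arguments nrm {R}.
Arguments ip {R}.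
Arguments lam2 {R}.

Section Mat.
Variable R : realType.
Local Notation C := R[i].
Local Notation re := (@complex.Re R).
Local Notation im := (@complex.Im R).
Variables (n : nat) (a : nat -> C).

Definition cve (v : 'cV[C]_n) (i : nat) : C :=
  if @insub nat (fun k => (k < n)%N) _ i is Some i' then v i' 0 else 0.

Lemma cve_nat (v : 'cV[C]_n) i (hi : (i < n)%N) : cve v i = v (Ordinal hi) 0.
Proof. by rewrite /cve (insubT (fun k => (k < n)%N) hi). Qed.

Lemma cveE (v : 'cV[C]_n) (i : 'I_n) : cve v i = v i 0.
Proof. by case: i => i hi; rewrite cve_nat. Qed.

Lemma mxe_nat (A : 'M[C]_n) i j (hi : (i < n)%N) (hj : (j < n)%N) :
  mxe A i j = A (Ordinal hi) (Ordinal hj).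
Proof. by rewrite /mxe (insubT (fun k => (k < n)%N) hi) (insubT (fun k => (k < n)%N) hj). Qed.

Lemma mxeE (A : 'M[C]_n) (i j : 'I_n) : mxe A i j = A i j.
Proof. by case: i => i hi; case: j => j hj; rewrite mxe_nat. Qed.

Lemma cve_shift (y : 'cV[C]_n) i : (0 < i)%N -> (i < n)%N ->
  cve (companion n a *m y) i = cve y i.-1.
Proof.
move=> i0 hi; have hi' : (i.-1 < n)%N by lia.
rewrite cve_nat cve_nat mxE (bigD1 (Ordinal hi')) //= big1.
  rewrite /companion mxE /= (negbTE (lt0n_neq0 i0)) prednK // eqxx mul1r addr0 //.
move=> j hj; rewrite /companion mxE /=  (negbTE (lt0n_neq0 i0)).
case: eqP => [e|]; last by rewrite mul0r.
exfalso; move/eqP: hj; apply; apply: val_inj => /=; lia.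
Qed.

Lemma cve_pow k (v : 'cV[C]_n) i : (i < n)%N ->
  cve (companion n a ^+ k *m v) i =
  if (i < k)%N then cve (companion n a ^+ (k - i) *m v) 0 else cve v (i - k).
Proof.
elim: k i => [|k IH] i hi.
  by rewrite expr0 mul1mx ltn0 subn0.
case: i hi => [|i] hi; first by rewrite subn0.
rewrite exprS -mulmxE -mulmxA cve_shift // IH; last by lia.
by rewrite ltnS subSS.
Qed.

Lemma cve0 (A : 'M[C]_n) (v : 'cV[C]_n) : (0 < n)%N ->
  cve (A *m v) 0 = \sum_(j < n) mxe A 0 j * cve v j.
Proof.
move=> n0; rewrite (cve_nat _ _ n0) mxE; apply: eq_bigr => j _.
by rewrite cveE; case: j => j hj; rewrite (mxe_nat _ _ _ n0 hj).
Qed.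

End Mat.
Arguments cve {R n}.
Local Open Scope classical_set_scope.

Lemma reindex (V : zmodType) (F : nat -> V) m :
  \sum_(1 <= j < m.+1) F (m - j)%N = \sum_(j < m) F j.
Proof.
rewrite big_add1 /= -(big_mkord xpredT) big_nat_rev /=.
by apply: eq_big_nat => i /andP[_ hi]; congr F; lia.
Qed.

Lemma sqmodN (R : realType) (z : R[i]) : sqmod (- z) = sqmod z.
Proof. by rewrite !sqmodE reN imN !sqrrN. Qed.

Lemma conjN (R : realType) (z : R[i]) : conjc (- z) = - conjc z.
Proof. by case: z => x y /=; rewrite /conjc. Qed.

Theorem mainTheorem11 (R : realType) (n : nat) (a : nat -> R[i])
  (hn : (2 <= n)%N) (ha1 : a 1%N != 0) :
  opnorm (companion n a ^+ 4) <=
  Num.sqrt ((delta1 n a + delta n a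
             + Num.sqrt ((delta1 n a - delta n a) ^+ 2 + 4 * delta2 n a)) / 2 + 1).
Proof.
have n0 : (0 < n)%N by lia.
set Cp := companion n a.
pose r k := fun l => mxe (Cp ^+ k) 0 l.
have hr1 : forall j, (1 <= j <= n)%N -> a j = - r 1%N (n - j)%N.
  move=> j /andP[j1 jn]; have hl : (n - j < n)%N by lia.
  rewrite /r expr1 (@mxe_nat R n _ 0 (n - j) n0 hl).
  by rewrite /Cp /companion mxE /= subKn // opprK.
have eA1 : alpha1 n a = nrm n (r 4%N) by exact: (reindex _ (fun l => sqmod (r 4%N l)) n).
have eB1 : beta1 n a = nrm n (r 3%N) by exact: (reindex _ (fun l => sqmod (r 3%N l)) n).
have eG1 : gamma1 n a = ip n (r 4%N) (r 3%N)
  by exact: (reindex _ (fun l => r 4%N l * conjc (r 3%N l)) n).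
have eB : beta n a = nrm n (r 2%N) by exact: (reindex _ (fun l => sqmod (r 2%N l)) n).
have eA : alpha n a = nrm n (r 1%N).
  rewrite /alpha; transitivity (\sum_(1 <= j < n.+1) sqmod (r 1%N (n - j)%N));
    last exact: (reindex _ (fun l => sqmod (r 1%N l)) n).
  by apply: eq_big_nat => j hj; rewrite hr1 // sqmodN.
have eG : gamma n a = ip n (r 2%N) (r 1%N).
  rewrite /gamma; transitivity (- \sum_(1 <= j < n.+1) - (r 2%N (n - j)%N * conjc (r 1%N (n - j)%N))); last first.
    by rewrite sumrN opprK; exact: (reindex _ (fun l => r 2%N l * conjc (r 1%N l)) n).
  congr (- _); apply: eq_big_nat => j hj; rewrite hr1 // /cconj conjN mulrN //.
have eG2 : gamma2 n a = ip n (r 4%N) (r 2%N)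
  by exact: (reindex _ (fun l => r 4%N l * conjc (r 2%N l)) n).
have eG4 : gamma4 n a = ip n (r 3%N) (r 2%N)
  by exact: (reindex _ (fun l => r 3%N l * conjc (r 2%N l)) n).
have eG3 : gamma3 n a = - ip n (r 4%N) (r 1%N).
  rewrite /gamma3; transitivity (\sum_(1 <= j < n.+1) - (r 4%N (n - j)%N * conjc (r 1%N (n - j)%N))); last first.
    by rewrite sumrN ; congr (- _); exact: (reindex _ (fun l => r 4%N l * conjc (r 1%N l)) n).
    apply: eq_big_nat => j hj; rewrite hr1 // /cconj conjN mulrN //.
have eG5 : gamma5 n a = - ip n (r 3%N) (r 1%N).
  rewrite /gamma5; transitivity (\sum_(1 <= j < n.+1) - (r 3%N (n - j)%N * conjc (r 1%N (n - j)%N))); last first.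
    by rewrite sumrN ; congr (- _); exact: (reindex _ (fun l => r 3%N l * conjc (r 1%N l)) n).
    apply: eq_big_nat => j hj; rewrite hr1 // /cconj conjN mulrN //.
have rE : forall k l, r k l = mxe (Cp ^+ k) 0 l by [].
clearbody r.
have ed1 : delta1 n a = lam2 (nrm n (r 4%N)) (nrm n (r 3%N)) (sqmod (ip n (r 4%N) (r 3%N))).
  by rewrite /delta1 eA1 eB1 eG1.
have ed : delta n a = lam2 (nrm n (r 1%N)) (nrm n (r 2%N)) (sqmod (ip n (r 2%N) (r 1%N))).
  by rewrite /delta eA eB eG.
have ed2 : delta2 n a = lam2 (sqmod (ip n (r 4%N) (r 2%N)) + sqmod (ip n (r 4%N) (r 1%N)))
             (sqmod (ip n (r 3%N) (r 2%N)) + sqmod (ip n (r 3%N) (r 1%N)))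
             (sqmod (ip n (r 4%N) (r 2%N) * conjc (ip n (r 3%N) (r 2%N))
                     + ip n (r 4%N) (r 1%N) * conjc (ip n (r 3%N) (r 1%N)))).
  rewrite /delta2 /lam2 eG2 eG3 eG4 eG5.
  move: (ip n (r 4%N) (r 2%N)) (ip n (r 4%N) (r 1%N)) (ip n (r 3%N) (r 2%N)) (ip n (r 3%N) (r 1%N)) => g2 g3 g4 g5.
  by rewrite /cconj !sqmodN conjN mulrNN [in RHS](addrA (_ + _)).
suff hb : forall v : 'cV[R[i]]_n, vnorm v = 1 ->
   vnorm (Cp ^+ 4 *m v) <= Num.sqrt (lam2 (delta1 n a) (delta n a) (delta2 n a) + 1).
  rewrite /opnorm.
  case: (pselect ([set x : R | exists v : 'cV[R[i]]_n, vnorm v = 1 /\ x = vnorm (Cp ^+ 4 *m v)] !=set0)%classic) => [ne|e].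
    by apply: ge_sup ne _ => x [v [hv ->]]; exact: hb.
  have -> : [set x : R | exists v : 'cV[R[i]]_n, vnorm v = 1 /\ x = vnorm (Cp ^+ 4 *m v)] = set0%classic.
    by apply/seteqP; split => x // hx; exfalso; apply: e; exists x.
  by rewrite sup0 sqrtr_ge0.
move=> v hv.
have hv1 : nrm n (cve v) = 1.
  have e : nrm n (cve v) = \sum_(i < n) sqmod (v i 0) by apply: eq_bigr => i _; rewrite cveE.
  rewrite e; move: hv; rewrite /vnorm => hv.
  have h0 : 0 <= \sum_(i < n) sqmod (v i 0) by apply: sumr_ge0 => i _; exact: sqmod_ge0.
  by rewrite -(sqr_sqrtr h0) hv expr1n.
pose x k := cve (Cp ^+ k *m v) 0.
have hx : forall k, x k = \sum_(j < n) r k j * cve v j.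
  by move=> k; rewrite /x cve0 //; apply: eq_bigr => j _; rewrite rE.
have hg := @gram R n (r 4%N) (r 3%N) (r 2%N) (r 1%N) (cve v) _ _ _ _ hv1 (hx 4%N) (hx 3%N) (hx 2%N) (hx 1%N).
rewrite -ed1 -ed -ed2 in hg.
have hpow : forall i, (i < n)%N -> cve (Cp ^+ 4 *m v) i = if (i < 4)%N then x (4 - i)%N else cve v (i - 4).
  by move=> i hi; rewrite (@cve_pow R n a 4 v i hi).
clearbody x.
pose g i := sqmod (if (i < 4)%N then x (4 - i)%N else cve v (i - 4)).
have e1 : \sum_(i < n) sqmod ((Cp ^+ 4 *m v) i 0) = \sum_(0 <= i < n) g i.
  by rewrite big_mkord; apply: eq_bigr => i _; rewrite -cveE hpow.
have e2 : \sum_(0 <= i < n) g i <= \sum_(0 <= i < n + 4) g i.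
  rewrite (@big_cat_nat _ _ _ n 0 (n + 4)) //=; last by lia.
  by rewrite lerDl; apply: sumr_ge0 => i _; exact: sqmod_ge0.
have e3 : \sum_(0 <= i < n + 4) g i = (sqmod (x 4%N) + sqmod (x 3%N) + sqmod (x 2%N) + sqmod (x 1%N))
      + \sum_(0 <= i < n) sqmod (cve v i).
  rewrite (@big_cat_nat _ _ _ 4 0 (n + 4)) //; last by lia.
  congr (_ + _).
    by rewrite !big_nat_recl // big_geq // /g /= addr0 !addrA.
  rewrite -{1}[4%N]add0n big_addn addnK; apply: eq_big_nat => i _.
  by rewrite /g ltnNge leq_addl /= addnK.
have e4 : \sum_(0 <= i < n) sqmod (cve v i) = 1 by rewrite big_mkord.
have hS0 : 0 <= sqmod (x 4%N) + sqmod (x 3%N) + sqmod (x 2%N) + sqmod (x 1%N).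
  by apply: addr_ge0; [apply: addr_ge0; [apply: addr_ge0|]|]; apply: sqmod_ge0.
rewrite /vnorm ler_sqrt; last by apply: addr_ge0 => //; apply: le_trans hS0 hg.
rewrite e1; apply: le_trans e2 _; rewrite e3 e4; exact: lerD hg (le_refl _).
Qed.
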